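(* Let $G$ be a connected finite simple undirected graph with vertex set $V_G$, $|V_G|\ge 3$, and maximum degree $d_G$. Let $W:V_G\to\mathbb{R}$ have a unique minimizer and suppose that the second-smallest value of $W$ (counted with multiplicity over vertices) exceeds the minimum value by exactly $1$. For $s\in[0,1]$ let $H(s)=(1-s)L_G+s\sum_{x}W(x)|x\rangle\langle x|$ and let $\gamma(s)$ be the gap between the smallest and second-smallest eigenvalues of $H(s)$. Suppose that for every $s\in[0,1)$ the ground state of $H(s)$ is single-peaked. Then for all $s\in[0,1]$, $$\gamma(s)\ge\min\left\{\frac{7}{16},\ \frac{1}{16\,d_G^2\,(8|W|+1)\,|V_G|^2}\right\},$$ where $|W|=\max_x W(x)-\min_x W(x)$; in particular $\gamma(s)=\Omega\!\left(\frac{1}{d_G^2|W||V_G|^2}\right)$ uniformly in $s\in[0,1]$.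
   Context: For a finite simple undirected graph $G$ with vertex set $V_G$, let $\mathcal{H}_G$ be the complex Hilbert space with orthonormal basis $\{|x\rangle : x\in V_G\}$. The graph Laplacian is $L_G=\sum_{x} d_x |x\rangle\langle x| - \sum_{x\sim y}|x\rangle\langle y|$, where $d_x$ is the degree of $x$ and the second sum runs over ordered pairs of adjacent vertices. For $s\in[0,1)$ and connected $G$, the ground state of $H(s)$ is nondegenerate and can be written $\sum_x\psi(x)|x\rangle$ with $\psi(x)>0$ for all $x$ (Perron–Frobenius). Such a $\psi$ has a local maximum at $x$ if $\psi(x)\ge\psi(y)$ for every neighbor $y$ of $x$, and $\psi$ is single-peaked if the set of its local maxima forms a connected set of vertices in $G$. *)

(* Defs.v *)
From HB Require Import structures.
From mathcomp Require Import all_boot all_order all_algebra.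
From mathcomp Require Import reals.
Set Implicit Arguments. Unset Strict Implicit. Unset Printing Implicit Defensive.
Import Order.TTheory GRing.Theory Num.Theory.
Local Open Scope ring_scope.

Section Defs.
Variable R : realType.
Variable n : nat.

Definition simple_graph (e : rel 'I_n) : Prop := symmetric e /\ irreflexive e.

Definition graph_connected (e : rel 'I_n) : Prop := forall x y, connect e x y.

Definition deg (e : rel 'I_n) (x : 'I_n) : nat := #|[set y | e x y]|.

Definition max_deg (e : rel 'I_n) : nat := (\max_(x : 'I_n) deg e x)%N.

Definition laplacian (e : rel 'I_n) : 'M[R]_n :=
  \matrix_(i, j) (if i == j then (deg e i)%:R else if e i j then -1 else 0).

Definition Hs (e : rel 'I_n) (W : 'I_n -> R) (s : R) : 'M[R]_n :=
  (1 - s) *: laplacian e + s *: diag_mx (\row_x W x).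

(* |W| = max_x W(x) - min_x W(x), written as max_{x,y} (W x - W y) *)
Definition Wspread (W : 'I_n -> R) : R :=
  \big[Num.max/0]_(x : 'I_n) \big[Num.max/0]_(y : 'I_n) (W x - W y).

Definition min_eigenvalue (A : 'M[R]_n) (a : R) : Prop :=
  eigenvalue A a /\ forall b, eigenvalue A b -> a <= b.

Definition local_max (e : rel 'I_n) (psi : 'I_n -> R) (x : 'I_n) : bool :=
  [forall y, e x y ==> (psi y <= psi x)].

Definition single_peaked (e : rel 'I_n) (psi : 'I_n -> R) : Prop :=
  forall x y, local_max e psi x -> local_max e psi y ->
    connect [rel a b | [&& e a b, local_max e psi a & local_max e psi b]] x y.

Definition sorted_spectrum (A : 'M[R]_n) (l : seq R) : Prop :=
  sorted <=%R l /\ char_poly A = \prod_(x <- l) ('X - x%:P).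

End Defs.

(* Main.v *)
Require Import Defs.
From HB Require Import structures.
From mathcomp Require Import all_boot all_order all_algebra.
From mathcomp Require Import reals.
From mathcomp.real_closed Require Import complex.
From mathcomp Require Import ring lra.
Import Order.TTheory GRing.Theory Num.Theory.
Local Open Scope ring_scope.

Section Spec.
Local Open Scope sesquilinear_scope.
Variable R : realType.
Local Notation C := (R[i]).
Local Notation toC := (real_complex R).

Lemma char_poly_sim n (P M : 'M[C]_n) : P \in unitmx ->
  char_poly (invmx P *m M *m P) = char_poly M.
Proof.
move=> Pu.
pose Pp := map_mx (@polyC C) P.
have Ppu : Pp \in unitmx by rewrite map_unitmx.
rewrite /char_poly.
have -> : char_poly_mx (invmx P *m M *m P) = invmx Pp *m char_poly_mx M *m Pp.
  rewrite /char_poly_mx !map_mxM map_invmx -/Pp mulmxBr mulmxBl.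
  by rewrite scalar_mxC -[_ *m invmx Pp *m Pp]mulmxA mulVmx // mulmx1.
  idtac.
rewrite !det_mulmx det_inv mulrC mulrA mulrV ?mul1r //.
Qed.

Lemma spec_setup n (A : 'M[R]_n) (l : seq R) : A^T = A ->
  char_poly A = \prod_(x <- l) ('X - x%:P) ->
  exists (P : 'M[C]_n) (D : 'rV[C]_n),
    [/\ P *m P^t* = 1%:M, P^t* *m P = 1%:M,
        map_mx toC A = P^t* *m diag_mx D *m P &
        perm_eq [seq D 0 k | k <- enum 'I_n] (map toC l)].
Proof.
move=> AT cA.
set AC := map_mx toC A.
have ACn : AC \is normalmx.
  apply: symmetric_normalmx.
    apply/is_hermitianmxP; rewrite expr0 scale1r map_mx_id //. by rewrite /AC map_trmx AT.
  apply/mxOverP => i j; rewrite mxE; apply/complex_realP; eexists; reflexivity.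
have Pu := spectral_unitarymx AC.
move/unitarymxP: (Pu) => PP.
have Pinv := invmx_unitary Pu.
have Punit := spectral_unit AC.
have PtP : (spectralmx AC)^t* *m spectralmx AC = 1%:M by rewrite -Pinv mulVmx.
exists (spectralmx AC), (spectral_diag AC).
have eAC := orthomx_spectralP ACn; rewrite Pinv in eAC.
split => //.
apply: prod_XsubC_eq.
transitivity (char_poly (diag_mx (spectral_diag AC))).
  rewrite big_map big_enum /= char_poly_trig ?diag_mx_is_trig //.
  by apply: eq_bigr => i _; rewrite mxE eqxx.
rewrite -(@char_poly_sim n _ (diag_mx (spectral_diag AC)) Punit) Pinv -eAC /AC -map_char_poly cA.
rewrite rmorph_prod big_map; apply: eq_bigr => x _.
by rewrite rmorphB /= map_polyX map_polyC.
Qed.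

Definition Qf n (A : 'M[R]_n) (f : 'I_n -> R) := \sum_i \sum_j f i * A i j * f j.
Arguments Qf {n}.

Lemma Re_sum I (r : seq I) (P : pred I) (F : I -> C) :
  complex.Re (\sum_(i <- r | P i) F i) = \sum_(i <- r | P i) complex.Re (F i).
Proof. by apply: (big_morph _ (fun x y => _) (erefl _)) => -[? ?] [? ?]. Qed.

Lemma Im_sum I (r : seq I) (P : pred I) (F : I -> C) :
  complex.Im (\sum_(i <- r | P i) F i) = \sum_(i <- r | P i) complex.Im (F i).
Proof. by apply: (big_morph _ (fun x y => _) (erefl _)) => -[? ?] [? ?]. Qed.

Lemma Re_QC n (A : 'M[R]_n) (w : 'rV[C]_n) :
  complex.Re ((w *m map_mx toC A *m w^t*) 0 0) =
  Qf A (fun x => complex.Re (w 0 x)) + Qf A (fun x => complex.Im (w 0 x)).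
Proof.
rewrite !mxE Re_sum /Qf -big_split /=.
under eq_bigr => j _ do rewrite !mxE big_distrl /= Re_sum.
rewrite exchange_big /=; apply: eq_bigr => i _; rewrite -big_split /=.
apply: eq_bigr => j _; rewrite !mxE.
case: (w 0 i) => a1 b1; case: (w 0 j) => a2 b2 /=.
ring.
Qed.

Lemma QC_formula n (A : 'M[R]_n) (P : 'M[C]_n) (D : 'rV[C]_n) (c : 'rV[C]_n) :
  P *m P^t* = 1%:M -> map_mx toC A = P^t* *m diag_mx D *m P ->
  ((c *m P) *m map_mx toC A *m (c *m P)^t*) 0 0 = \sum_k D 0 k * (c 0 k * (c 0 k)^*) /\
  ((c *m P) *m (c *m P)^t*) 0 0 = \sum_k c 0 k * (c 0 k)^*.
Proof.
move=> PP ->.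
have wt : (c *m P)^t* = P^t* *m c^t* by rewrite trmx_mul map_mxM.
rewrite wt; split.
  rewrite !mulmxA -[c *m P *m P^t*]mulmxA PP mulmx1.
  rewrite -[c *m diag_mx D *m P *m P^t*]mulmxA PP mulmx1.
  rewrite mul_mx_diag !mxE; apply: eq_bigr => k _; rewrite !mxE; ring.
rewrite mulmxA -[c *m P *m P^t*]mulmxA PP mulmx1 !mxE.
by apply: eq_bigr => k _; rewrite !mxE.
Qed.

Lemma count_card n (F : 'I_n -> bool) : count F (enum 'I_n) = #|[set k | F k]|.
Proof.
rewrite cardE /enum_mem size_filter filter_predT; apply: eq_count => k.
by rewrite -[mem _ k]/(k \in _) inE.
Qed.

Lemma sorted_head_le (l : seq R) x : sorted <=%R l -> x \in l -> l`_0 <= x.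
Proof.
case: l => [//|a r] /= pth; rewrite in_cons => /orP[/eqP->//|xr].
have := order_path_min (@le_trans _ R) pth => /allP/(_ x xr) //.
Qed.

Lemma re_toC (x : R) : complex.Re (toC x) = x. Proof. by []. Qed.
Lemma im_toC (x : R) : complex.Im (toC x) = 0. Proof. by []. Qed.
Lemma Re_toCM (x : R) (y : C) : complex.Re (toC x * y) = x * complex.Re y.
Proof. by case: y => a b /=; ring. Qed.

Lemma spec_LA n (A : 'M[R]_n) (l : seq R) : A^T = A -> sorted <=%R l ->
  char_poly A = \prod_(x <- l) ('X - x%:P) ->
  forall f : 'I_n -> R, l`_0 * \sum_i f i ^+ 2 <= Qf A f.
Proof.
move=> AT sl cA f.
have [P [D [PP PtP eA pD]]] := @spec_setup n A l AT cA.
pose fC : 'rV[C]_n := \row_x toC (f x).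
pose c := fC *m P^t*.
have wE : c *m P = fC by rewrite /c -mulmxA PtP mulmx1.
have [QE NE] := @QC_formula n A P D c PP eA.
rewrite wE in QE NE.
have key : toC (l`_0) * ((fC *m fC^t*) 0 0) <= (fC *m map_mx toC A *m fC^t*) 0 0.
  rewrite QE NE mulr_sumr -subr_ge0 -sumrB; apply: sumr_ge0 => k _.
  rewrite -mulrBl; apply: mulr_ge0; last exact: mul_conjC_ge0.
  have : D 0 k \in map toC l.
    by rewrite -(perm_mem pD); apply/mapP; exists k => //; rewrite mem_enum.
  case/mapP => x xl ->; rewrite subr_ge0 lecR; exact: sorted_head_le.
move: key; rewrite lecE => /andP[_].
rewrite Re_QC.
have -> : Qf A (fun x => complex.Re (fC 0 x)) = Qf A f.
  by apply: eq_bigr => i _; apply: eq_bigr => j _; rewrite !mxE.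
have -> : Qf A (fun x => complex.Im (fC 0 x)) = 0.
  by rewrite /Qf big1 // => i _; rewrite big1 // => j _; rewrite !mxE /= !mul0r.
rewrite addr0 !mxE Re_toCM.
have -> : complex.Re (\sum_j fC 0 j * fC^t* j 0) = \sum_i f i ^+ 2.
  by rewrite Re_sum; apply: eq_bigr => i _; rewrite !mxE /=; ring.
done.
Qed.

Lemma size_spec n (A : 'M[R]_n) (l : seq R) :
  char_poly A = \prod_(x <- l) ('X - x%:P) -> size l = n.
Proof.
move=> cA; have := size_char_poly A; rewrite cA size_prod_XsubC.
by case.
Qed.

Lemma Re_N n (v : 'rV[C]_n) : complex.Re ((v *m v^t*) 0 0) =
  \sum_i complex.Re (v 0 i) ^+ 2 + \sum_i complex.Im (v 0 i) ^+ 2.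
Proof.
rewrite !mxE Re_sum -big_split /=; apply: eq_bigr => x _; rewrite !mxE.
by case: (v 0 x) => ? ? /=; ring.
Qed.

Lemma spec_LB n (A : 'M[R]_n) (l : seq R) : A^T = A -> sorted <=%R l ->
  char_poly A = \prod_(x <- l) ('X - x%:P) -> (1 < n)%N ->
  forall (p : 'I_n -> R) (t : R),
  (forall g : 'I_n -> R, \sum_i g i * p i = 0 -> t * \sum_i g i ^+ 2 <= Qf A g) ->
  t <= l`_1.
Proof.
move=> AT sl cA n1 p t hyp.
have [P [D [PP PtP eA pD]]] := @spec_setup n A l AT cA.
have szl := @size_spec n A l cA.
have [i [j [Di Dj ij]]] : exists i j : 'I_n, [/\ D 0 i <= toC l`_1, D 0 j <= toC l`_1 & i != j].
  have : (1 < #|[set k : 'I_n | (D 0 k <= toC l`_1)%R]|)%N.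
    rewrite -count_card -(count_map (fun k => D 0 k) (fun z => z <= toC l`_1)).
    rewrite (permP pD).
    have : (1 < size l)%N by rewrite szl.
    move: sl; clear cA pD szl hyp; case: l => [|a [|b r]] //= sl _.
    have ab : a <= b by case/andP: sl.
    by rewrite lecR ab lexx.
  case/card_gt1P => x [y []]; rewrite !inE => hx hy xy.
  by exists x, y.
have ji : j != i by rewrite eq_sym.
pose r k := \sum_x P k x * toC (p x).
pose ci : C := if r i == 0 then 1 else r j.
pose cj : C := if r i == 0 then 0 else - r i.
pose c : 'rV[C]_n := \row_k (if k == i then ci else if k == j then cj else 0).
pose w := c *m P.
have cnz : c != 0.
  apply/eqP => /rowP c0.
  move: (c0 i) (c0 j); rewrite !mxE eqxx (negbTE ji) eqxx.
  rewrite /ci /cj; case: eqP => [_|/eqP ri]; first by move=> /eqP; rewrite oner_eq0.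
  by move=> _ /eqP; rewrite oppr_eq0 (negbTE ri).
have wnz : w != 0.
  apply: contraNneq cnz => w0.
  by rewrite -[c]mulmx1 -PP mulmxA -/w w0 !mul0mx.
have orth : \sum_x w 0 x * toC (p x) = 0.
  rewrite /w.
  under eq_bigr => x _ do rewrite mxE big_distrl /=.
  rewrite exchange_big /=.
  rewrite (eq_bigr (fun k => c 0 k * r k)); last first.
    by move=> k _; rewrite /r mulr_sumr; apply: eq_bigr => x _; rewrite mulrA.
  rewrite (bigD1 i) //= (bigD1 j) //= big1 ?addr0; last first.
    by move=> k /andP[ki kj]; rewrite mxE (negbTE ki) (negbTE kj) mul0r.
  rewrite !mxE eqxx (negbTE ji) eqxx /ci /cj.
  by case: eqP => [->|_]; ring.
pose a x := complex.Re (w 0 x).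
pose b x := complex.Im (w 0 x).
have ha := hyp a; have hb := hyp b.
have orthRe : \sum_i a i * p i = 0.
  transitivity (complex.Re (\sum_x w 0 x * toC (p x))); last by rewrite orth.
  rewrite Re_sum; by apply: eq_bigr => x _; rewrite /a; case: (w 0 x) => ? ? /=; ring.
have orthIm : \sum_i b i * p i = 0.
  transitivity (complex.Im (\sum_x w 0 x * toC (p x))); last by rewrite orth.
  rewrite Im_sum; by apply: eq_bigr => x _; rewrite /b; case: (w 0 x) => ? ? /=; ring.
have {}ha := ha orthRe; have {}hb := hb orthIm.
have [QE NE] := @QC_formula n A P D c PP eA.
have key : (w *m map_mx toC A *m w^t*) 0 0 <= toC (l`_1) * ((w *m w^t*) 0 0).
  rewrite QE NE mulr_sumr -subr_ge0 -sumrB; apply: sumr_ge0 => k _.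
  rewrite -mulrBl; rewrite mxE.
  case: (eqVneq k i) => [->|ki]; first by apply: mulr_ge0; [rewrite subr_ge0|exact: mul_conjC_ge0].
  case: (eqVneq k j) => [->|kj]; first by apply: mulr_ge0; [rewrite subr_ge0|exact: mul_conjC_ge0].
  by rewrite mul0r mulr0.
move: key; rewrite lecE => /andP[_]; rewrite Re_QC Re_toCM -/a -/b.
have NRe : complex.Re ((w *m w^t*) 0 0) = \sum_i a i ^+ 2 + \sum_i b i ^+ 2.
  by rewrite Re_N.
rewrite NRe => key.
have pos : 0 < \sum_i a i ^+ 2 + \sum_i b i ^+ 2.
  rewrite -big_split /= lt_def; apply/andP; split; last first.
    by apply: sumr_ge0 => x _; apply: addr_ge0; apply: sqr_ge0.
  apply: contraNneq wnz => /eqP; rewrite psumr_eq0; last first.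
    by move=> x _; apply: addr_ge0; apply: sqr_ge0.
  move=> /allP h; apply/eqP/rowP => x; rewrite [RHS]mxE.
  have := h x (mem_index_enum x); rewrite /= paddr_eq0 ?sqr_ge0 // => /andP[]; rewrite !sqrf_eq0 /a /b.
  by case: (w 0 x) => ? ? /= /eqP -> /eqP ->.
have : t * (\sum_i a i ^+ 2 + \sum_i b i ^+ 2) <= l`_1 * (\sum_i a i ^+ 2 + \sum_i b i ^+ 2).
  by apply: le_trans key; rewrite mulrDr; exact: lerD ha hb.
by rewrite ler_pM2r.
Qed.
End Spec.


Lemma aux (R : realType) (X Y k D : R) : 0 <= k -> 0 <= D -> Y ^+ 2 <= k * D ->
  (X + Y) ^+ 2 <= (k + 1) * (X ^+ 2 + D).
Proof.
move=> k0 D0 h.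
have [kz|kp] := eqVneq k 0.
  rewrite kz mul0r in h; rewrite kz.
  have Y0 : Y = 0 by apply/eqP; rewrite -sqrf_eq0 eq_le h sqr_ge0.
  rewrite Y0 addr0 add0r mul1r; lra.
have kpos : 0 < k by rewrite lt_def kp k0.
have : 0 <= (k * X - Y) ^+ 2 by apply: sqr_ge0.
nra.
Qed.

Section G.
Variable R : realType.
Variable n : nat.
Variable e : rel 'I_n.
Variable W : 'I_n -> R.
Variable s : R.
Hypothesis sg : simple_graph e.

Let H := Hs e W s.
Definition cc (x : 'I_n) : R := (1 - s) * (deg e x)%:R + s * W x.

Lemma e_sym x y : e x y = e y x.
Proof. by case: sg => sy _; rewrite sy. Qed.
Lemma eirr x : e x x = false.
Proof. by case: sg => _ ir; rewrite ir. Qed.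

Lemma H_entry i j : H i j = (i == j)%:R * cc i - (e i j)%:R * (1 - s).
Proof.
rewrite /H /Hs /laplacian !mxE.
case: (eqVneq i j) => [->|ij]; first by rewrite eirr /cc /=; ring.
case: (e i j) => /=; ring.
Qed.

Lemma H_sym : H^T = H.
Proof.
apply/matrixP => i j; rewrite mxE; case: (eqVneq i j) => [->//|ij].
by rewrite !H_entry e_sym eq_sym (negbTE ij) /= !mul0r.
Qed.

Lemma deg_sum x : (deg e x)%:R = \sum_y (e x y)%:R :> R.
Proof.
rewrite /deg -sum1_card natr_sum big_mkcond /=; apply: eq_bigr => y _.
by rewrite inE; case: (e x y).
Qed.

Lemma dsumD (F G : 'I_n -> 'I_n -> R) :
  \sum_i \sum_j (F i j + G i j) = \sum_i \sum_j F i j + \sum_i \sum_j G i j.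
Proof. by rewrite -big_split; apply: eq_bigr => i _; rewrite big_split. Qed.
Lemma dsumB (F G : 'I_n -> 'I_n -> R) :
  \sum_i \sum_j (F i j - G i j) = \sum_i \sum_j F i j - \sum_i \sum_j G i j.
Proof. by rewrite -sumrB; apply: eq_bigr => i _; rewrite sumrB. Qed.
Lemma dsumZ a (F : 'I_n -> 'I_n -> R) :
  \sum_i \sum_j (a * F i j) = a * \sum_i \sum_j F i j.
Proof. by rewrite mulr_sumr; apply: eq_bigr => i _; rewrite mulr_sumr. Qed.
Lemma dswap (F : 'I_n -> 'I_n -> R) :
  \sum_i \sum_j (e i j)%:R * F i j = \sum_i \sum_j (e i j)%:R * F j i.
Proof. by rewrite exchange_big /=; apply: eq_bigr => i _; apply: eq_bigr => j _; rewrite e_sym. Qed.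
Lemma sum_delta i (F : 'I_n -> R) : \sum_j (i == j)%:R * F j = F i.
Proof.
rewrite (bigD1 i) //= big1 ?eqxx ?mul1r ?addr0 // => j ji.
by rewrite eq_sym (negbTE ji) mul0r.
Qed.

Lemma QfE (g : 'I_n -> R) : @Qf R n H g =
  \sum_i cc i * g i ^+ 2 - (1 - s) * \sum_i \sum_j (e i j)%:R * g i * g j.
Proof.
rewrite /Qf.
transitivity (\sum_i \sum_j ((i == j)%:R * (cc i * g i * g j)
   - (1 - s) * ((e i j)%:R * g i * g j))).
  by apply: eq_bigr => i _; apply: eq_bigr => j _; rewrite H_entry; ring.
rewrite dsumB dsumZ; congr (_ - _); apply: eq_bigr => i _.
by rewrite sum_delta expr2 mulrA.
Qed.

Lemma Qf_H (g : 'I_n -> R) : @Qf R n H g =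
  s * \sum_i W i * g i ^+ 2 +
  (1 - s) / 2 * \sum_i \sum_j (e i j)%:R * (g i - g j) ^+ 2.
Proof.
have E : \sum_i \sum_j (e i j)%:R * (g i - g j) ^+ 2 =
  2 * \sum_i \sum_j (e i j)%:R * g i ^+ 2 - 2 * \sum_i \sum_j (e i j)%:R * g i * g j.
  transitivity (\sum_i \sum_j ((e i j)%:R * g i ^+ 2 + (e i j)%:R * g j ^+ 2
     - 2 * ((e i j)%:R * g i * g j))).
    by apply: eq_bigr => i _; apply: eq_bigr => j _; ring.
  rewrite dsumB dsumD dsumZ -(dswap (fun i j => g i ^+ 2)); ring.
have E2 : \sum_i \sum_j (e i j)%:R * g i ^+ 2 = \sum_i (deg e i)%:R * g i ^+ 2.
  by apply: eq_bigr => i _; rewrite deg_sum mulr_suml.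
have E3 : \sum_i cc i * g i ^+ 2 =
    (1 - s) * \sum_i (deg e i)%:R * g i ^+ 2 + s * \sum_i W i * g i ^+ 2.
  by rewrite !mulr_sumr -big_split; apply: eq_bigr => i _ /=; rewrite /cc; ring.
rewrite QfE E E2 E3; by field.
Qed.

Lemma dirichlet (u h : 'I_n -> R) (lam : R) :
  (forall x, cc x * u x - (1 - s) * \sum_y (e x y)%:R * u y = lam * u x) ->
  2 * (@Qf R n H (fun x => u x * h x) - lam * \sum_x (u x * h x) ^+ 2) =
  (1 - s) * \sum_x \sum_y (e x y)%:R * u x * u y * (h x - h y) ^+ 2.
Proof.
move=> eig.
pose T1 := \sum_x \sum_y (e x y)%:R * (u x * u y * h x ^+ 2).
pose T3 := \sum_x \sum_y (e x y)%:R * (u x * u y * h x * h y).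
have a : \sum_i cc i * (u i * h i) ^+ 2 - lam * \sum_x (u x * h x) ^+ 2 = (1 - s) * T1.
  rewrite mulr_sumr -sumrB /T1 mulr_sumr; apply: eq_bigr => x _.
  have ex := eig x.
  transitivity ((cc x * u x - lam * u x) * (u x * h x ^+ 2)); first by ring.
  rewrite (_ : cc x * u x - lam * u x = (1 - s) * \sum_y (e x y)%:R * u y); last first.
    by rewrite -ex; ring.
  by rewrite -mulrA mulr_suml; congr (_ * _); apply: eq_bigr => y _; ring.
have b : \sum_i \sum_j (e i j)%:R * (u i * h i) * (u j * h j) = T3.
  by apply: eq_bigr => i _; apply: eq_bigr => j _; ring.
have c : \sum_x \sum_y (e x y)%:R * u x * u y * (h x - h y) ^+ 2 = 2 * T1 - 2 * T3.
  transitivity (\sum_x \sum_y ((e x y)%:R * (u x * u y * h x ^+ 2)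
     + (e x y)%:R * (u y * u x * h y ^+ 2) - 2 * ((e x y)%:R * (u x * u y * h x * h y)))).
    by apply: eq_bigr => i _; apply: eq_bigr => j _; ring.
  rewrite dsumB dsumD dsumZ -(dswap (fun x y => u x * u y * h x ^+ 2)) -/T1 -/T3; ring.
rewrite QfE c.
transitivity (2 * ((\sum_i cc i * (u i * h i) ^+ 2 - lam * \sum_x (u x * h x) ^+ 2)
   - (1 - s) * \sum_i \sum_j (e i j)%:R * (u i * h i) * (u j * h j))); first by ring.
rewrite a b; ring.
Qed.

Lemma eig_form (u : 'I_n -> R) lam :
  (forall x, \sum_i u i * H i x = lam * u x) ->
  forall x, cc x * u x - (1 - s) * \sum_y (e x y)%:R * u y = lam * u x.
Proof.
move=> E x; rewrite -E.
transitivity (\sum_i ((x == i)%:R * (cc x * u i) - (1 - s) * ((e x i)%:R * u i))).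
  by rewrite sumrB sum_delta mulr_sumr.
apply: eq_bigr => i _; rewrite H_entry e_sym.
case: (eqVneq x i) => [->|xi]; first by ring.
by rewrite /= !mul0r; ring.
Qed.

Fixpoint Dp (h : 'I_n -> R) (a : 'I_n) (r : seq 'I_n) : R :=
  if r is b :: r' then (h a - h b) ^+ 2 + Dp h b r' else 0.
Fixpoint Ep (u h : 'I_n -> R) (a : 'I_n) (r : seq 'I_n) : R :=
  if r is b :: r' then (e a b)%:R * u a * u b * (h a - h b) ^+ 2 + Ep u h b r' else 0.

Lemma Dp_ge0 h a r : 0 <= Dp h a r.
Proof.
elim: r a => [|b r IH] a /=; first by [].
by apply: addr_ge0; [apply: sqr_ge0 | apply: IH].
Qed.

Lemma Dp_bound h a r : (h a - h (last a r)) ^+ 2 <= (size r)%:R * Dp h a r.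
Proof.
elim: r a => [|b r IH] a /=; first by rewrite subrr expr0n /= mul0r.
have := IH b.
rewrite (_ : h a - h (last b r) = (h a - h b) + (h b - h (last b r))); last by ring.
move=> hb; rewrite -[(size r).+1]addn1 natrD.
by apply: aux => //; apply: Dp_ge0.
Qed.

Lemma Ep_ge u h c a r : 0 <= c -> path e a r -> all (fun v => c <= u v) (a :: r) ->
  c ^+ 2 * Dp h a r <= Ep u h a r.
Proof.
elim: r a => [|b r IH] a c0 /=; first by rewrite mulr0.
case/andP => eab pth /and3P[ca cb al].
rewrite eab mul1r mulrDr; apply: lerD; last by apply: IH => //=; rewrite cb.
apply: ler_wpM2r; first exact: sqr_ge0.
by rewrite expr2; apply: ler_pM.
Qed.

Definition Fz (u h : 'I_n -> R) z := \sum_b (e z b)%:R * u z * u b * (h z - h b) ^+ 2.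

Lemma Fz_ge0 u h z : (forall x, 0 <= u x) -> 0 <= Fz u h z.
Proof.
move=> u0; apply: sumr_ge0 => b _; apply: mulr_ge0; last exact: sqr_ge0.
by apply: mulr_ge0; [apply: mulr_ge0|].
Qed.

Lemma Ep_le u h a r : (forall x, 0 <= u x) -> path e a r ->
  Ep u h a r <= \sum_(z <- a :: r) Fz u h z.
Proof.
move=> u0; elim: r a => [|b r IH] a /=.
  by move=> _; rewrite big_cons big_nil addr0; apply: Fz_ge0.
case/andP => eab pth; rewrite big_cons; apply: lerD; last exact: IH.
rewrite /Fz (bigD1 b) //= lerDl; apply: sumr_ge0 => b' _.
apply: mulr_ge0; last exact: sqr_ge0.
by apply: mulr_ge0; [apply: mulr_ge0|].
Qed.

Lemma sum_uniq_le (F : 'I_n -> R) (r : seq 'I_n) : uniq r -> (forall z, 0 <= F z) ->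
  \sum_(z <- r) F z <= \sum_z F z.
Proof.
move=> ur F0; rewrite big_uniq //= [X in _ <= X](bigID (mem r)) /= lerDl.
by apply: sumr_ge0.
Qed.

Lemma poincare (u h : 'I_n -> R) (p : 'I_n) :
  (forall x, 0 < u x) ->
  (forall x, exists r, [/\ path e x r, last x r = p, uniq (x :: r) &
                          all (fun v => u x <= u v) (x :: r)]) ->
  \sum_x u x ^+ 2 * (h x - h p) ^+ 2 <=
  n%:R ^+ 2 * \sum_x \sum_y (e x y)%:R * u x * u y * (h x - h y) ^+ 2.
Proof.
move=> upos hp.
have u0 : forall x, 0 <= u x by move=> x; apply: ltW.
set S := \sum_x \sum_y _.
have S0 : 0 <= S by apply: sumr_ge0 => x _; apply: Fz_ge0.
have step : forall x, u x ^+ 2 * (h x - h p) ^+ 2 <= n%:R * S.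
  move=> x; have [r [pth lst ur al]] := hp x.
  have kn : (size r <= n)%N.
    have := uniq_leq_size ur (fun z _ => mem_enum 'I_n z).
    by rewrite size_enum_ord /= => /ltnW.
  apply: (@le_trans _ _ ((size r)%:R * (u x ^+ 2 * Dp h x r))).
    rewrite [X in _ <= X]mulrCA; apply: ler_wpM2l; first exact: sqr_ge0.
    by rewrite -{1}lst; apply: Dp_bound.
  apply: (@le_trans _ _ ((size r)%:R * Ep u h x r)).
    by apply: ler_wpM2l => //; apply: Ep_ge.
  apply: (@le_trans _ _ ((size r)%:R * S)).
    apply: ler_wpM2l => //; apply: le_trans (@Ep_le u h x r u0 pth) _.
    by apply: sum_uniq_le => // z; apply: Fz_ge0.
  by apply: ler_wpM2r => //; rewrite ler_nat.
apply: le_trans (ler_sum _ (fun x _ => step x)) _.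
by rewrite sumr_const card_ord -mulr_natr le_eqVlt; apply/orP; left; apply/eqP; ring.
Qed.

Lemma Qf_ext A (f g : 'I_n -> R) : (forall x, f x = g x) -> @Qf R n A f = @Qf R n A g.
Proof. by move=> fg; apply: eq_bigr => i _; apply: eq_bigr => j _; rewrite !fg. Qed.

Lemma gs_gap (u : 'I_n -> R) lam p : (0 < n)%N -> s <= 1 -> (forall x, 0 < u x) ->
  (forall x, \sum_i u i * H i x = lam * u x) ->
  (forall x, exists r, [/\ path e x r, last x r = p, uniq (x :: r) &
                          all (fun v => u x <= u v) (x :: r)]) ->
  forall g : 'I_n -> R, \sum_i g i * u i = 0 ->
  (lam + (1 - s) / (2 * n%:R ^+ 2)) * \sum_i g i ^+ 2 <= @Qf R n H g.
Proof.
move=> n0 s1 upos eig hp g orth.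
pose h x := g x / u x.
have gh : forall x, g x = u x * h x.
  by move=> x; rewrite /h mulrC divfK // gt_eqF.
have dir := dirichlet u h lam (@eig_form u lam eig).
have poin := poincare u h p upos hp.
rewrite -(@Qf_ext H _ _ gh) in dir.
have G : \sum_x (u x * h x) ^+ 2 = \sum_i g i ^+ 2 by apply: eq_bigr => x _; rewrite gh.
rewrite G in dir.
set S := \sum_x \sum_y _ in dir poin.
have le1 : \sum_i g i ^+ 2 <= \sum_x u x ^+ 2 * (h x - h p) ^+ 2.
  have E : \sum_x u x ^+ 2 * (h x - h p) ^+ 2 =
      \sum_i g i ^+ 2 - 2 * h p * \sum_i g i * u i + h p ^+ 2 * \sum_i u i ^+ 2.
    rewrite !mulr_sumr -sumrB -big_split /=; apply: eq_bigr => x _.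
    rewrite gh; ring.
  rewrite E orth mulr0 subr0 lerDl; apply: mulr_ge0; first exact: sqr_ge0.
  by apply: sumr_ge0 => i _; apply: sqr_ge0.
have N0 : 0 < n%:R ^+ 2 :> R by rewrite exprn_gt0 // ltr0n.
set G2 := \sum_i g i ^+ 2 in le1 G dir *.
set Q := @Qf R n H g in dir *.
have k0 : 0 <= (1 - s) / (2 * n%:R ^+ 2) by apply: divr_ge0; [lra | apply: mulr_ge0 => //; apply: ltW].
have := ler_wpM2l k0 (le_trans le1 poin).
have -> : (1 - s) / (2 * n%:R ^+ 2) * (n%:R ^+ 2 * S) = (1 - s) * S / 2.
  by field; rewrite pnatr_eq0 -lt0n.
lra.
Qed.

Lemma path_all (x : 'I_n) (u : 'I_n -> R) a r :
  path [rel a b | [&& e a b, u x <= u a & u x <= u b]] a r ->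
  all (fun v => u x <= u v) r.
Proof.
elim: r a => [//|b r IH] a /= /andP[/and3P[_ _ xb] pth].
by rewrite xb (IH b pth).
Qed.

Lemma asc (u : 'I_n -> R) (x : 'I_n) : forall k y,
    (#|[set z | (u y < u z)%R]| <= k)%N -> u x <= u y ->
    exists q, [/\ local_max e u q,
      connect [rel a b | [&& e a b, u x <= u a & u x <= u b]] y q & u x <= u q].
Proof.
elim=> [|k IH] y ck xy.
all: case lmy: (local_max e u y); first by exists y; split.
all: move/negbT: lmy => /forallPn [z]; rewrite negb_imply => /andP[eyz]; rewrite -ltNge => yz.
all: have prop : [set w | (u z < u w)%R] \proper [set w | (u y < u w)%R].
all: try (apply/properP; split; [by apply/subsetP => w; rewrite !inE => zw; apply: lt_trans yz zw
                            | by exists z; rewrite !inE // ltxx]).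
all: have lt := proper_card prop.
  by move: (leq_trans lt ck).
have [q [lq cq xq]] := IH z (leq_trans lt ck) (le_trans xy (ltW yz)).
exists q; split => //; apply: connect_trans cq; apply: connect1.
by rewrite /= eyz xy (le_trans xy (ltW yz)).
Qed.

Lemma path_exists (u : 'I_n -> R) (p : 'I_n) : (forall z, u z <= u p) ->
  single_peaked e u ->
  forall x, exists r, [/\ path e x r, last x r = p, uniq (x :: r) &
                          all (fun v => u x <= u v) (x :: r)].
Proof.
move=> pmax sp x.
pose Rx := [rel a b | [&& e a b, u x <= u a & u x <= u b]].
have cn : (#|[set z | (u x < u z)%R]| <= n)%N.
  by rewrite -[n in (_ <= n)%N]card_ord max_card.
have [q [lq cxq xq]] := @asc u x n x cn (lexx _).
have lp : local_max e u p by apply/forallP => y; apply/implyP => _; apply: pmax.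
have /connectP [r0 pth0 lst0] := sp q p lq lp.
have pthx : path Rx q r0.
  elim: r0 q xq lq pth0 {lst0 cxq} => [//|b r IH] a xa la /= /andP[/and3P[eab _ lb] pth].
  have ab : u a <= u b.
    by move/forallP: lb => /(_ a) /implyP; apply; rewrite e_sym.
  have xb := le_trans xa ab.
  by rewrite eab xa xb /= (IH b xb lb pth).
have cqp : connect Rx q p by apply/connectP; exists r0.
have /connectP [r1 pth1 lst1] := connect_trans cxq cqp.
move: lst1; case: (shortenP pth1) => r2 pth2 ur2 _ lst2.
exists r2; split.
- by apply: sub_path pth2 => a b /and3P[].
- by rewrite lst2.
- exact: ur2.
- by rewrite /= lexx (@path_all x u x r2 pth2).
Qed.

Lemma pos_of_eig (u : 'I_n -> R) lam : s < 1 -> graph_connected e ->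
  (forall x, 0 <= u x) -> (exists y, u y != 0) ->
  (forall x, \sum_i u i * H i x = lam * u x) -> forall x, 0 < u x.
Proof.
move=> s1 conn u0 [y uy] eig x.
have ef := @eig_form u lam eig.
have clo : forall a b, e a b -> u a = 0 -> u b = 0.
  move=> a b eab ua.
  have := ef a; rewrite ua !mulr0 sub0r => /eqP.
  rewrite oppr_eq0 mulf_eq0 subr_eq0 => /orP[/eqP s1'|].
    by move: s1; rewrite -s1' ltxx.
  rewrite psumr_eq0; last by move=> i _; apply: mulr_ge0 => //; apply: ler0n.
  move=> /allP /(_ b (mem_index_enum b)); rewrite eab mul1r => /eqP //.
rewrite lt_def u0 andbT; apply/negP => /eqP ux.
have /connectP [r pth lst] := conn x y.
have : u (last x r) = 0.
  elim: r x ux pth {lst} => [//|b r IH] a ua /= /andP[eab pth].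
  exact: (IH b (clo a b eab ua) pth).
by rewrite -lst => /eqP; rewrite (negbTE uy).
Qed.
End G.

Section C.
Variable R : realType.
Variable n : nat.

Definition Bil (A : 'M[R]_n) (f g : 'I_n -> R) := \sum_i \sum_j f i * A i j * g j.

Lemma min_eigvec (A : 'M[R]_n) (lam : R) (u : 'I_n -> R) : A^T = A ->
  (forall f, lam * \sum_i f i ^+ 2 <= @Qf R n A f) ->
  @Qf R n A u = lam * \sum_i u i ^+ 2 ->
  forall j, \sum_i u i * A i j = lam * u j.
Proof.
move=> AT hmin hu j.
pose g (k : 'I_n) : R := (j == k)%:R.
have Bsym : Bil A g u = Bil A u g.
  rewrite /Bil exchange_big /=; apply: eq_bigr => i _; apply: eq_bigr => k _.
  have := congr1 (fun M : 'M[R]_n => M k i) AT; rewrite mxE => ->; ring.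
have expand : forall t, @Qf R n A (fun i => u i + t * g i) =
    @Qf R n A u + t * (Bil A u g + Bil A g u) + t ^+ 2 * @Qf R n A g.
  move=> t; rewrite /Qf /Bil.
  transitivity (\sum_i \sum_j (u i * A i j * u j + t * (u i * A i j * g j + g i * A i j * u j)
     + t ^+ 2 * (g i * A i j * g j))).
    by apply: eq_bigr => i _; apply: eq_bigr => k _; ring.
  by rewrite !(dsumD, dsumZ).
have expand2 : forall t, \sum_i (u i + t * g i) ^+ 2 =
    \sum_i u i ^+ 2 + t * (2 * \sum_i u i * g i) + t ^+ 2 * \sum_i g i ^+ 2.
  move=> t; rewrite !mulr_sumr -!big_split /=; apply: eq_bigr => i _ /=; ring.
pose a := @Qf R n A g - lam * \sum_i g i ^+ 2.
pose b := Bil A u g - lam * \sum_i u i * g i.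
have a0 : 0 <= a by rewrite /a subr_ge0.
have key : forall t, 0 <= 2 * t * b + t ^+ 2 * a.
  move=> t; have := hmin (fun i => u i + t * g i); rewrite expand expand2 Bsym hu => h.
  have -> : 2 * t * b + t ^+ 2 * a =
    (lam * \sum_i u i ^+ 2 + t * (Bil A u g + Bil A u g) + t ^+ 2 * @Qf R n A g) -
    lam * (\sum_i u i ^+ 2 + t * (2 * \sum_i u i * g i) + t ^+ 2 * \sum_i g i ^+ 2).
    by rewrite /a /b; ring.
  by rewrite subr_ge0.
have b0 : b = 0.
  have a1 : 0 < a + 1 by apply: ltr_wpDl a0 ltr01.
  pose k := (a + 1)^-1.
  have k0 : 0 < k by rewrite /k invr_gt0.
  have ka : k * (a + 1) = 1 by rewrite /k mulVf // gt_eqF.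
  have := key (- b * k).
  have ka' : k * a = 1 - k by rewrite -ka; ring.
  have -> : 2 * (- b * k) * b + (- b * k) ^+ 2 * a = - (b ^+ 2 * (k * (1 + k))).
    transitivity (-2 * b ^+ 2 * k + b ^+ 2 * k * (k * a)); first by ring.
    rewrite ka'; ring.
  have kk : 0 < k * (1 + k) by apply: mulr_gt0 => //; apply: addr_gt0.
  rewrite oppr_ge0 => h.
  have : b ^+ 2 <= 0 by rewrite -(ler_pM2r kk) mul0r.
  move=> hb; apply/eqP; rewrite -sqrf_eq0 eq_le hb sqr_ge0.
  done.
have E1 : Bil A u g = \sum_i u i * A i j.
  rewrite /Bil; apply: eq_bigr => i _.
  rewrite (bigD1 j) //= big1 ?addr0 /g ?eqxx ?mulr1 // => k kj.
  by rewrite eq_sym (negbTE kj) mulr0.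
have E2 : \sum_i u i * g i = u j.
  rewrite (bigD1 j) //= big1 ?addr0 /g ?eqxx ?mulr1 // => k kj.
  by rewrite eq_sym (negbTE kj) mulr0.
by move: b0; rewrite /b E1 E2 => /eqP; rewrite subr_eq0 => /eqP.
Qed.
End C.


Arguments spec_LA {R n A l}.
Arguments spec_LB {R n A l}.
Arguments size_spec {R n A l}.
Arguments H_sym {R n e W s}.
Arguments H_entry {R n e W s}.
Arguments Qf_H {R n e W s}.
Arguments QfE {R n e W s}.
Arguments gs_gap {R n e W s}.
Arguments path_exists {R n e}.
Arguments pos_of_eig {R n e W s}.
Arguments min_eigvec {R n A lam u}.
Arguments sum_delta {R n}.
Arguments sorted_head_le {R l x}.

Lemma argmax_ex (R : realType) n (u : 'I_n -> R) (x0 : 'I_n) : exists p, forall z, u z <= u p.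
Proof.
exists ([arg max_(i > x0) u i]%O); case: arg_maxP => // i _ h z; exact: h.
Qed.

Lemma delta_sq (R : realType) n (x0 : 'I_n) : \sum_k ((x0 == k)%:R : R) ^+ 2 = 1.
Proof.
rewrite (eq_bigr (fun k => (x0 == k)%:R * 1)); first by rewrite sum_delta.
by move=> k _; case: (x0 == k); rewrite /= ?expr1n ?expr0n ?mulr1 ?mul0r.
Qed.

Lemma Wspread_ge0 (R : realType) n (W : 'I_n -> R) : 0 <= Wspread W.
Proof.
rewrite /Wspread; apply: (big_rec (fun x => 0 <= x)) => // i x _ hx.
by rewrite le_max hx orbT.
Qed.

Theorem mainTheorem8 (R : realType) (n : nat) (e : rel 'I_n) (W : 'I_n -> R) :
  simple_graph e -> graph_connected e -> (3 <= n)%N ->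
  (* unique minimizer x0, and the second-smallest value is W x0 + 1 *)
  (exists x0 : 'I_n,
      (forall x, x != x0 -> W x0 + 1 <= W x) /\
      (exists x1, x1 != x0 /\ W x1 = W x0 + 1)) ->
  (* the ground state of H(s) is single-peaked for every s in [0,1) *)
  (forall s : R, 0 <= s -> s < 1 ->
     forall (a : R) (psi : 'rV[R]_n),
       min_eigenvalue (Hs e W s) a ->
       psi *m Hs e W s = a *: psi ->
       (forall x, 0 < psi 0 x) ->
       single_peaked e (fun x => psi 0 x)) ->
  forall s : R, 0 <= s -> s <= 1 ->
  forall l : seq R, sorted_spectrum (Hs e W s) l ->
    Num.min (7 / 16)
      (1 / (16 * (max_deg e)%:R ^+ 2 * (8 * Wspread W + 1) * n%:R ^+ 2))
    <= l`_1 - l`_0.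
Proof.
move=> sg conn n3 [x0 [Wx0 [x1 [x10 Wx1]]]] hsp s s0 s1 l [sl cA].
set H := Hs e W s.
have HT : H^T = H := H_sym sg.
have szl := size_spec cA.
have LA := spec_LA HT sl cA.
have n1 : (1 < n)%N by apply: leq_trans n3.
have LB := spec_LB HT sl cA n1.
pose d : R := (max_deg e)%:R.
pose dx := fun k : 'I_n => ((x0 == k)%:R : R).
have l0_le : l`_0 <= cc R n e W s x0.
  have := LA dx; rewrite delta_sq mulr1.
  have -> : Qf R n H dx = H x0 x0.
    rewrite /Qf.
    transitivity (\sum_i dx i * (\sum_j dx j * H i j)).
      by apply: eq_bigr => i _; rewrite mulr_sumr; apply: eq_bigr => j _; ring.
    rewrite /dx sum_delta sum_delta //.
  by rewrite H_entry // eqxx (_ : e x0 x0 = false) ?mul1r ?mul0r ?subr0 //; case: sg.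
have l1_ge : s * (W x0 + 1) <= l`_1.
  apply: (LB dx) => g orth.
  have g0 : g x0 = 0.
    by move: orth; under eq_bigr => k _ do rewrite mulrC; rewrite sum_delta.
  rewrite Qf_H //.
  have lap : 0 <= (1 - s) / 2 * \sum_i \sum_j (e i j)%:R * (g i - g j) ^+ 2.
    apply: mulr_ge0; first by apply: divr_ge0; lra.
    by apply: sumr_ge0 => i _; apply: sumr_ge0 => j _; apply: mulr_ge0; [apply: ler0n|apply: sqr_ge0].
  rewrite -[X in X <= _]addr0; apply: lerD => //.
  rewrite -mulrA; apply: ler_wpM2l => //; rewrite mulr_sumr; apply: ler_sum => i _.
  case: (eqVneq i x0) => [->|ix]; first by rewrite g0 expr0n /= !mulr0.
  by apply: ler_wpM2r; [apply: sqr_ge0|apply: Wx0].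
have deg_le : ((deg e x0)%:R : R) <= d.
  by rewrite ler_nat /max_deg; apply: (@leq_bigmax _ (fun x => deg e x)).
have gap1 : s - (1 - s) * d <= l`_1 - l`_0.
  have : cc R n e W s x0 <= (1 - s) * d + s * W x0.
    by rewrite /cc lerD2r; apply: ler_wpM2l => //; lra.
  lra.
have n0 : (0 < n)%N by apply: leq_trans n3.
have gap2 : s < 1 -> (1 - s) / (2 * n%:R ^+ 2) <= l`_1 - l`_0.
  move=> s1'.
  have l0in : l`_0 \in l by apply: mem_nth; rewrite szl.
  have ev : eigenvalue H l`_0.
    by rewrite eigenvalue_root_char cA root_prod_XsubC.
  have /eigenvalueP [v vH vnz] := ev.
  pose v0 := fun x => v 0 x.
  pose u := fun x => `|v 0 x|.
  have Qv : Qf R n H v0 = l`_0 * \sum_i v0 i ^+ 2.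
    rewrite /Qf exchange_big /= mulr_sumr; apply: eq_bigr => j _.
    rewrite -mulr_suml.
    have := congr1 (fun M : 'rV_n => M 0 j) vH; rewrite !mxE => ->.
    rewrite /v0; ring.
  have Quv : Qf R n H u <= Qf R n H v0.
    apply: ler_sum => i _; apply: ler_sum => j _; rewrite /u /v0.
    case: (eqVneq i j) => [->|ij].
      have E1 : `|v 0 j| * H j j * `|v 0 j| = H j j * `|v 0 j| ^+ 2 by ring.
      have E2 : v 0 j * H j j * v 0 j = H j j * v 0 j ^+ 2 by ring.
      by rewrite E1 E2 real_normK ?num_real.
    have c0 : H i j <= 0.
      rewrite H_entry // (negbTE ij) /= mul0r sub0r oppr_le0.
      by apply: mulr_ge0; [apply: ler0n | lra].
    have E1 : `|v 0 i| * H i j * `|v 0 j| = H i j * `|v 0 i * v 0 j| by rewrite normrM; ring.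
    have E2 : v 0 i * H i j * v 0 j = H i j * (v 0 i * v 0 j) by ring.
    rewrite E1 E2; apply: ler_wnM2l => //.
    by apply: real_ler_norm; apply: num_real.
  have sq : \sum_i u i ^+ 2 = \sum_i v0 i ^+ 2.
    by apply: eq_bigr => i _; rewrite /u real_normK ?num_real.
  have Qu : Qf R n H u = l`_0 * \sum_i u i ^+ 2.
    apply/eqP; rewrite eq_le LA andbT sq -Qv Quv //.
  have eigu := min_eigvec HT LA Qu.
  have u0 : forall x, 0 <= u x by move=> x; apply: normr_ge0.
  have unz : exists y, u y != 0.
    apply/existsP; apply: contraNT vnz; rewrite negb_exists => /forallP h.
    by apply/eqP/rowP => x; rewrite mxE; move: (h x); rewrite negbK normr_eq0 => /eqP.
  have upos := pos_of_eig sg _ _ s1' conn u0 unz eigu.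
  pose psi : 'rV[R]_n := \row_x u x.
  pose u2 := fun x => psi 0 x.
  have u2E : forall x, u2 x = u x by move=> x; rewrite /u2 mxE.
  have psiH : psi *m H = l`_0 *: psi.
    apply/rowP => j; rewrite !mxE -eigu; apply: eq_bigr => i _; rewrite mxE //.
  have mine : min_eigenvalue H l`_0.
    split => // b; rewrite eigenvalue_root_char cA root_prod_XsubC.
    exact: sorted_head_le.
  have pos2 : forall x, 0 < psi 0 x by move=> x; rewrite mxE.
  have spk := hsp s s0 s1' _ _ mine psiH pos2.
  have [p pmax] := @argmax_ex _ _ u2 x0.
  have hp := path_exists sg u2 p pmax spk.
  have upos2 : forall x, 0 < u2 x by move=> x; rewrite u2E.
  have eig2 : forall x, \sum_i u2 i * H i x = l`_0 * u2 x.
    by move=> x; rewrite u2E -eigu; apply: eq_bigr => i _; rewrite u2E.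
  have gg := gs_gap sg u2 (l`_0) p n0 s1 upos2 eig2 hp.
  have := LB u2 _ gg; lra.
have d1 : 1 <= d.
  apply: le_trans deg_le; rewrite ler1n lt0n cards_eq0; apply/negP => /eqP E.
  have /connectP [r pth lst] := conn x0 x1.
  case: r pth lst => [/= _ E1|y r /= /andP[exy _] _]; first by move: x10; rewrite E1 eqxx.
  have : y \in [set y | e x0 y] by rewrite inE.
  by rewrite E inE.
have M0 := @Wspread_ge0 _ _ W.
have N0 : 0 < (n%:R : R) by rewrite ltr0n.
rewrite -/d.
have ex1 : (1 - s) * (d + 1) = (1 - s) * d + (1 - s) by ring.
case: (lerP ((1 - s) * (d + 1)) (1 / 2)) => h.
  rewrite ge_min; apply/orP; left; lra.
have s1' : s < 1.
  rewrite lt_neqAle s1 andbT; apply/eqP => es; move: h; rewrite es subrr mul0r; lra.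
rewrite ge_min; apply/orP; right; apply: le_trans (gap2 s1').
have K0 : 0 < 16 * d ^+ 2 * (8 * Wspread W + 1) * n%:R ^+ 2.
  apply: mulr_gt0; last by apply: exprn_gt0.
  apply: mulr_gt0; last lra.
  apply: mulr_gt0; first lra.
  by apply: exprn_gt0; lra.
rewrite ler_pdivrMr //.
have -> : (1 - s) / (2 * n%:R ^+ 2) * (16 * d ^+ 2 * (8 * Wspread W + 1) * n%:R ^+ 2)
   = 8 * ((1 - s) * d ^+ 2) + 64 * (((1 - s) * d ^+ 2) * Wspread W).
  by field; rewrite gt_eqF.
have A1 : d + 1 <= 2 * d ^+ 2 by rewrite expr2; nra.
have A2 : (1 - s) * (d + 1) <= (1 - s) * (2 * d ^+ 2) by apply: ler_wpM2l => //; lra.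
have A3 : (1 - s) * (2 * d ^+ 2) = 2 * ((1 - s) * d ^+ 2) by ring.
have X0 : 0 <= (1 - s) * d ^+ 2 by apply: mulr_ge0; [lra | apply: sqr_ge0].
have XM : 0 <= ((1 - s) * d ^+ 2) * Wspread W by apply: mulr_ge0.
lra.
Qed.
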